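(* Let $\mathscr{I}_1\subseteq(0,1)$ and $\mathscr{I}_2\subseteq\mathbb{R}$, and let $f_\nu^\alpha:\mathbb{R}\to\mathbb{R}$ ($\nu\in\mathscr{I}_1$, $\alpha\in\mathscr{I}_2$) be even continuous functions and $\vartheta_\nu^\alpha\in[0,\infty)$ be numbers such that for some $C>0$, $\|f_\nu^\alpha\|_{L^\infty}\le C$, $\vartheta_\nu^\alpha\le C\nu^2$, and $\operatorname{Lip}(f_\nu^\alpha)\le C\nu^{-1}$ for all $\nu,\alpha$ (where $\operatorname{Lip}(f)=\sup_{x\ne y}|f(x)-f(y)|/|x-y|$). Fix $q_*>0$. (i) Define \[ G_\nu^\alpha(X):=\int_0^Xf_\nu^\alpha(s+\vartheta_\nu^\alpha\tanh(q_*s))\,ds-\int_0^{X+\vartheta_\nu^\alpha\tanh(q_*X)}f_\nu^\alpha(s)\,ds . \] Then there exist $L_\nu^{\alpha,\infty}\in\mathbb{R}$ such that \[ \sup_{\nu\in\mathscr{I}_1,\alpha\in\mathscr{I}_2}\left[\nu^{-1}\left(\sup_{X\in\mathbb{R}}e^{q_*|X|}\left|G_\nu^\alpha(X)-\nu L_\nu^{\alpha,\infty}\tanh(q_*X)\right|\right)+|L_\nu^{\alpha,\infty}|\right]<\infty . \] (ii) Define $H_\nu^\alpha(X):=f_\nu^\alpha(X+\nu+\vartheta_\nu^\alpha\tanh(q_*X+q_*\nu))-f_\nu^\alpha(X+\nu+\vartheta_\nu^\alpha\tanh(q_*X))$. Then \[ \sup_{\nu\in\mathscr{I}_1,\alpha\in\mathscr{I}_2,X\in\mathbb{R}}\nu^{-2}e^{2q_*|X|}|H_\nu^\alpha(X)|<\infty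 . \] *)

(* Defs.v *)
From Stdlib Require Import Reals.
From Coquelicot Require Import Coquelicot.
Open Scope R_scope.

Definition Gfun (f : R -> R) (theta qs X : R) : R :=
  RInt (fun s => f (s + theta * tanh (qs * s))) 0 X
  - RInt f 0 (X + theta * tanh (qs * X)).

Definition Hfun (f : R -> R) (theta qs nu X : R) : R :=
  f (X + nu + theta * tanh (qs * X + qs * nu))
  - f (X + nu + theta * tanh (qs * X)).

(* Main.v *)
Require Import Defs.
From Stdlib Require Import Reals.
From Coquelicot Require Import Coquelicot.
From Stdlib Require Import Lra Psatz Classical ClassicalEpsilon.
Open Scope R_scope.
Lemma tanh_exp x : tanh x = (exp x - exp (- x)) / (exp x + exp (- x)).
Proof.
  unfold tanh, sinh, cosh. assert (0 < exp x) by apply exp_pos.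
  assert (0 < exp (-x)) by apply exp_pos. field. lra.
Qed.

Lemma tanh_bounds x : -1 < tanh x < 1.
Proof.
  rewrite tanh_exp. assert (0 < exp x) by apply exp_pos.
  assert (0 < exp (-x)) by apply exp_pos.
  split; [apply Rlt_div_r|apply Rlt_div_l]; lra.
Qed.

Lemma tanh_opp x : tanh (- x) = - tanh x.
Proof.
  rewrite !tanh_exp, Ropp_involutive. assert (0 < exp x) by apply exp_pos.
  assert (0 < exp (-x)) by apply exp_pos. field. lra.
Qed.

Lemma tanh_0 : tanh 0 = 0.
Proof. rewrite tanh_exp, Ropp_0, exp_0. field. Qed.

Lemma is_derive_tanh x : is_derive tanh x (1 - tanh x ^ 2).
Proof.
  assert (H : forall y, tanh y = (exp y - exp (- y)) / (exp y + exp (- y))) by apply tanh_exp.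
  apply is_derive_ext with (f := fun y => (exp y - exp (- y)) / (exp y + exp (- y))).
  { intros; now rewrite H. }
  assert (0 < exp x) by apply exp_pos.
  assert (0 < exp (-x)) by apply exp_pos.
  auto_derive. lra. rewrite H. field. lra.
Qed.

Lemma exp_tanh_le t : 0 <= t -> exp t * (1 - tanh t) <= 1.
Proof.
  intros Ht. rewrite tanh_exp.
  assert (0 < exp t) by apply exp_pos.
  assert (0 < exp (-t)) by apply exp_pos.
  assert (E : exp t * exp (-t) = 1) by (rewrite <- exp_plus, Rplus_opp_r; apply exp_0).
  replace (exp t * (1 - (exp t - exp (- t)) / (exp t + exp (- t))))
    with (2 * exp t * exp (-t) / (exp t + exp (-t))) by (field; lra). rewrite Rmult_assoc, E, Rmult_1_r.
  apply Rle_div_l. lra. assert (0 <= (exp t - exp (-t))^2) by (apply pow2_ge_0). assert (4 <= (exp t + exp (-t))^2) by nra. nra.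
Qed.

Lemma tanh_diff_bound a d : 0 <= d ->
  Rabs (tanh (a + d) - tanh a) <= 4 * d * exp (2 * d) * exp (- (2 * Rabs a)).
Proof.
  intros Hd.
  assert (K : forall y, tanh y = 1 - 2 / (exp (2 * y) + 1)).
  { intros y. rewrite tanh_exp. assert (0 < exp y) by apply exp_pos.
    assert (0 < exp (-y)) by apply exp_pos.
    assert (E : exp (2*y) = exp y * exp y) by (rewrite <- exp_plus; f_equal; ring).
    assert (E2 : exp y * exp (-y) = 1) by (rewrite <- exp_plus, Rplus_opp_r; apply exp_0).
    replace (exp (-y)) with (/ exp y) by (rewrite exp_Ropp; reflexivity).
    rewrite E. field. split; nra. }
  rewrite !K.
  set (A := exp (2 * a)). set (D := exp (2 * d)).
  assert (EB : exp (2 * (a + d)) = A * D) by (unfold A, D; rewrite <- exp_plus; f_equal; ring).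
  rewrite EB.
  assert (HA : 0 < A) by apply exp_pos.
  assert (HD1 : 1 <= D) by (unfold D; pose proof (exp_ineq1_le (2*d)); lra).
  assert (HD2 : D - 1 <= 2 * d * D).
  { pose proof (exp_ineq1_le (- (2 * d))) as H1.
    assert (E : exp (- (2*d)) * D = 1) by (unfold D; rewrite <- exp_plus; rewrite <- exp_0; f_equal; ring).
    nra. }
  replace (1 - 2 / (A * D + 1) - (1 - 2 / (A + 1)))
    with (2 * A * (D - 1) / ((A + 1) * (A * D + 1))) by (field; nra).
  rewrite Rabs_pos_eq.
  2: { apply Rle_mult_inv_pos; nra. }
  assert (Q : A / ((A + 1) * (A * D + 1)) <= exp (- (2 * Rabs a))).
  { apply Rle_div_l. nra.
    destruct (Rle_dec 0 a) as [Ha|Ha].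
    - rewrite Rabs_pos_eq by lra.
      assert (E : exp (- (2*a)) * A = 1) by (unfold A; rewrite <- exp_plus; rewrite <- exp_0; f_equal; ring).
      assert (0 < exp (- (2*a))) by apply exp_pos. replace (exp (-(2*a)) * ((A+1)*(A*D+1))) with ((exp(-(2*a))*A)*(A*D+1) + exp(-(2*a))*(A*D+1)) by ring. rewrite E. assert (0 <= exp(-(2*a))*(A*D+1)) by (apply Rmult_le_pos; nra). nra.
    - rewrite Rabs_left by lra. replace (- (2 * - a)) with (2 * a) by ring. fold A.
      assert (1 <= (A+1)*(A*D+1)) by nra. nra. }
  assert (0 <= exp (- (2 * Rabs a))) by (left; apply exp_pos).
  replace (2 * A * (D - 1) / ((A + 1) * (A * D + 1))) with (2 * (D - 1) * (A / ((A + 1) * (A * D + 1)))) by (field; nra).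
  assert (0 <= A / ((A + 1) * (A * D + 1))) by (apply Rle_mult_inv_pos; nra).
  nra.
Qed.

Lemma mono_deriv (F dF : R -> R) : (forall x, is_derive F x (dF x)) -> (forall x, 0 <= dF x) ->
  forall x y, x <= y -> F x <= F y.
Proof.
  intros HD Hp x y Hxy.
  destruct (MVT_gen F x y dF) as [c [_ Hc]].
  - intros; apply HD.
  - intros z _. apply continuity_pt_filterlim. exact (ex_derive_continuous (K:=R_AbsRing) (V:=R_NormedModule) F z (ex_intro _ _ (HD z))).
  - specialize (Hp c). nra.
Qed.

Lemma is_derive_RInt0 (f : R -> R) x : (forall z, continuous f z) ->
  is_derive (RInt f 0) x (f x).
Proof.
  intros Hc. apply is_derive_RInt with (a := 0).
  - apply filter_forall. intros b. apply RInt_correct. apply ex_RInt_continuous. intros; apply Hc.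
  - apply Hc.
Qed.

Lemma is_derive_G (f : R -> R) th q X : (forall z, continuous f z) ->
  is_derive (Gfun f th q) X (- (th * q * (1 - tanh (q * X) ^ 2)) * f (X + th * tanh (q * X))).
Proof.
  intros Hc. unfold Gfun.
  assert (Dg : forall y, is_derive (fun s => s + th * tanh (q * s)) y (1 + th * (q * (1 - tanh (q * y) ^ 2)))).
  { intros y. apply is_derive_ext with (f := fun s => s + th * ((exp (q*s) - exp (- (q*s))) / (exp (q*s) + exp (- (q*s))))).
    { intros t; now rewrite tanh_exp. }
    assert (0 < exp (q*y)) by apply exp_pos.
    assert (0 < exp (-(q*y))) by apply exp_pos.
    auto_derive. lra. rewrite tanh_exp. field. lra. }
  assert (Hh : forall z, continuous (fun s => f (s + th * tanh (q * s))) z).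
  { intros z. apply (continuous_comp (fun s => s + th * tanh (q * s)) f). exact (ex_derive_continuous (K:=R_AbsRing) (V:=R_NormedModule) _ z (ex_intro _ _ (Dg z))). apply Hc. }
  eapply is_derive_ext_loc.  apply filter_forall. intros t. reflexivity.
  evar (d : R).
  replace (- (th * q * (1 - tanh (q * X) ^ 2)) * f (X + th * tanh (q * X))) with d.
  apply (is_derive_minus (RInt (fun s => f (s + th * tanh (q * s))) 0) (fun x => RInt f 0 (x + th * tanh (q * x)))).
  apply is_derive_RInt0. apply Hh.
  apply (is_derive_comp (RInt f 0) (fun s => s + th * tanh (q * s))).
  apply is_derive_RInt0. apply Hc. apply Dg.
  unfold d, minus, plus, opp, scal; simpl. unfold mult; simpl. ring.
Qed.

Lemma RInt_even (k : R -> R) X : (forall z, continuous k z) -> (forall x, k (-x) = k x) ->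
  RInt k 0 (-X) = - RInt k 0 X.
Proof.
  intros Hc He.
  pose proof (RInt_comp_lin k (-1) 0 0 X) as H.
  replace (-1 * 0 + 0) with 0 in H by ring.
  replace (-1 * X + 0) with (-X) in H by ring.
  rewrite <- H. 2: { apply ex_RInt_continuous. intros; apply Hc. }
  change (- RInt k 0 X) with (opp (RInt k 0 X)). rewrite <- (RInt_opp k 0 X). 2: { apply ex_RInt_continuous. intros; apply Hc. }
  apply RInt_ext. intros x _. unfold scal, opp; simpl. unfold mult; simpl.
  replace (-1 * x + 0) with (-x) by ring. rewrite He. ring.
Qed.

Lemma G_odd (f : R -> R) th q X : (forall z, continuous f z) -> (forall x, f (-x) = f x) ->
  Gfun f th q (- X) = - Gfun f th q X.
Proof.
  intros Hc He. unfold Gfun.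
  assert (Hh : forall z, continuous (fun s => f (s + th * tanh (q * s))) z).
  { intros z. apply (continuous_comp (fun s => s + th * tanh (q * s)) f).
    apply continuity_pt_filterlim. apply continuity_pt_plus. apply continuity_pt_id.
    apply continuity_pt_mult. apply continuity_pt_const. intros a b; reflexivity.
    apply (continuity_pt_comp (fun s => q * s) tanh).
    apply continuity_pt_mult. apply continuity_pt_const. intros a b; reflexivity. apply continuity_pt_id.
    apply derivable_continuous_pt. exists (1 - tanh (q * z) ^ 2).
    apply is_derive_Reals. apply is_derive_tanh. apply Hc. }
  rewrite RInt_even; auto.
  2: { intros x. simpl. replace (- x + th * tanh (q * - x)) with (- (x + th * tanh (q * x))). apply He. replace (q * - x) with (- (q * x)) by ring. rewrite tanh_opp. ring. }
  replace (- X + th * tanh (q * - X)) with (- (X + th * tanh (q * X))).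
  2: { replace (q * - X) with (- (q * X)) by ring. rewrite tanh_opp. ring. }
  rewrite RInt_even; auto. ring.
Qed.

Lemma G_0 (f : R -> R) th q : Gfun f th q 0 = 0.
Proof.
  unfold Gfun. rewrite Rmult_0_r, tanh_0, Rmult_0_r, Rplus_0_l, !RInt_point.
  unfold zero; simpl. ring.
Qed.

Lemma Dtanh c q y : is_derive (fun s => c * tanh (q * s)) y (c * (q * (1 - tanh (q * y) ^ 2))).
Proof.
  apply is_derive_ext with (f := fun s => c * ((exp (q*s) - exp (- (q*s))) / (exp (q*s) + exp (- (q*s))))).
  { intros t; now rewrite tanh_exp. }
  assert (0 < exp (q*y)) by apply exp_pos.
  assert (0 < exp (-(q*y))) by apply exp_pos.
  auto_derive. lra. rewrite tanh_exp. field. lra.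
Qed.

Lemma partI (f : R -> R) th C q : (forall z, continuous f z) -> (forall x, Rabs (f x) <= C) ->
  (forall x, f (-x) = f x) -> 0 <= th -> 0 < q ->
  exists g, Rabs g <= th * C /\
    forall X, Rabs (Gfun f th q X - g * tanh (q * X)) <= 2 * (th * C) * (1 - tanh (q * Rabs X)).
Proof.
  intros Hc Hb He Hth Hq.
  set (G := Gfun f th q).
  assert (HC : 0 <= C) by (pose proof (Hb 0); pose proof (Rabs_pos (f 0)); lra).
  assert (HthC : 0 <= th * C) by nra.
  set (c := th * C). assert (Hc0 : 0 <= c) by exact HthC.
  assert (Pm : forall x y, x <= y -> G x + c * tanh (q * x) <= G y + c * tanh (q * y)).
  { apply (mono_deriv (fun x => G x + c * tanh (q * x))
      (fun x => - (th * q * (1 - tanh (q * x) ^ 2)) * f (x + th * tanh (q * x)) + c * (q * (1 - tanh (q * x) ^ 2)))).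
    - intros x. apply (is_derive_plus G (fun s => c * tanh (q * s))). apply is_derive_G; auto. apply Dtanh.
    - intros x. pose proof (tanh_bounds (q * x)). pose proof (Hb (x + th * tanh (q * x))) as Hb'.
      apply Rabs_le_between in Hb'.
      assert (0 <= 1 - tanh (q * x) ^ 2) by nra.
      assert (0 <= th * q * (1 - tanh (q * x) ^ 2)) by (apply Rmult_le_pos; nra).
      unfold c. replace (- (th * q * (1 - tanh (q * x) ^ 2)) * f (x + th * tanh (q * x)) +
        th * C * (q * (1 - tanh (q * x) ^ 2))) with ((th * q * (1 - tanh (q * x) ^ 2)) * (C - f (x + th * tanh (q * x)))) by ring.
      apply Rmult_le_pos; lra. }
  assert (Nm : forall x y, x <= y -> - (G x - c * tanh (q * x)) <= - (G y - c * tanh (q * y))).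
  { apply (mono_deriv (fun x => - (G x - c * tanh (q * x)))
      (fun x => - (- (th * q * (1 - tanh (q * x) ^ 2)) * f (x + th * tanh (q * x)) - c * (q * (1 - tanh (q * x) ^ 2))))).
    - intros x. apply (is_derive_opp (fun x => G x - c * tanh (q * x))).
      apply (is_derive_minus G (fun s => c * tanh (q * s))). apply is_derive_G; auto. apply Dtanh.
    - intros x. pose proof (tanh_bounds (q * x)). pose proof (Hb (x + th * tanh (q * x))) as Hb'.
      apply Rabs_le_between in Hb'.
      assert (0 <= 1 - tanh (q * x) ^ 2) by nra.
      assert (0 <= th * q * (1 - tanh (q * x) ^ 2)) by (apply Rmult_le_pos; nra).
      unfold c. replace (- (- (th * q * (1 - tanh (q * x) ^ 2)) * f (x + th * tanh (q * x)) -
        th * C * (q * (1 - tanh (q * x) ^ 2)))) with ((th * q * (1 - tanh (q * x) ^ 2)) * (C + f (x + th * tanh (q * x)))) by ring.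
      apply Rmult_le_pos; lra. }
  set (E := fun y => exists X, 0 <= X /\ y = G X + c * tanh (q * X)).
  assert (HG0 : G 0 = 0) by apply G_0.
  assert (UB : forall X, 0 <= X -> forall Y, E Y -> Y <= G X - c * tanh (q * X) + 2 * c).
  { intros X HX Y [Z [HZ ->]]. pose proof (tanh_bounds (q * X)). pose proof (tanh_bounds (q * Z)).
    destruct (Rle_dec X Z) as [h|h].
    - specialize (Nm X Z h). nra.
    - assert (Z <= X) by lra. specialize (Pm Z X H1). nra. }
  assert (Hbd : bound E).
  { exists (G 0 - c * tanh (q * 0) + 2 * c). intros y Hy. apply (UB 0); [lra|auto]. }
  assert (Hex : exists y, E y) by (exists (G 0 + c * tanh (q * 0)); exists 0; split; [lra|reflexivity]).
  destruct (completeness E Hbd Hex) as [l [Hl1 Hl2]].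
  assert (L1 : forall X, 0 <= X -> G X + c * tanh (q * X) <= l).
  { intros X HX. apply Hl1. exists X; auto. }
  assert (L2 : forall X, 0 <= X -> l <= G X - c * tanh (q * X) + 2 * c).
  { intros X HX. apply Hl2. intros y Hy. apply UB; auto. }
  exists (l - c).
  assert (T0 : tanh (q*0) = 0) by (rewrite Rmult_0_r; apply tanh_0).
  assert (Hpos : forall X, 0 <= X -> Rabs (G X - (l - c) * tanh (q * X)) <= 2 * c * (1 - tanh (q * X))).
  { intros X HX. pose proof (L1 0 (Rle_refl 0)). pose proof (L2 0 (Rle_refl 0)).
    specialize (L1 X HX). specialize (L2 X HX).
    rewrite HG0, T0 in H, H0.
    pose proof (tanh_bounds (q * X)).
    assert (A1 : -(c * (1 - tanh (q * X))) <= (l - c) * (1 - tanh (q * X)) <= c * (1 - tanh (q * X))).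
    { split; [rewrite Ropp_mult_distr_l|]; apply Rmult_le_compat_r; lra. }
    apply Rabs_le. lra. }
  split.
  - pose proof (L1 0 (Rle_refl 0)). pose proof (L2 0 (Rle_refl 0)).
    rewrite HG0, T0 in H, H0. apply Rabs_le. lra.
  - intros X. destruct (Rle_dec 0 X) as [h|h].
    + rewrite (Rabs_pos_eq X) by lra. apply Hpos; auto.
    + rewrite (Rabs_left X) by lra.
      replace X with (- (- X)) at 1 2 by ring. unfold G in *. rewrite G_odd; auto.
      replace (q * - - X) with (- (q * - X)) by ring. rewrite tanh_opp.
      replace (- Gfun f th q (- X) - (l - c) * - tanh (q * - X)) with (- (Gfun f th q (- X) - (l - c) * tanh (q * - X))) by ring.
      rewrite Rabs_Ropp. apply Hpos. lra.
Qed.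

Lemma exp_le_mono x y : x <= y -> exp x <= exp y.
Proof. intros [h|h]. left; now apply exp_increasing. subst; lra. Qed.

Theorem lemmaB4
  (I1 I2 : R -> Prop)
  (hI1 : forall nu, I1 nu -> 0 < nu < 1)
  (f : R -> R -> R -> R) (theta : R -> R -> R) (C qs : R)
  (hC : 0 < C)
  (heven : forall nu a, I1 nu -> I2 a -> forall x, f nu a (- x) = f nu a x)
  (hcont : forall nu a, I1 nu -> I2 a -> forall x, continuous (f nu a) x)
  (hbound : forall nu a, I1 nu -> I2 a -> forall x, Rabs (f nu a x) <= C)
  (htheta0 : forall nu a, I1 nu -> I2 a -> 0 <= theta nu a)
  (htheta : forall nu a, I1 nu -> I2 a -> theta nu a <= C * nu ^ 2)
  (hlip : forall nu a, I1 nu -> I2 a -> forall x y,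
      Rabs (f nu a x - f nu a y) <= C / nu * Rabs (x - y))
  (hqs : 0 < qs) :
  (exists (L : R -> R -> R) (M : R), forall nu a, I1 nu -> I2 a -> forall X,
      / nu * (exp (qs * Rabs X) *
              Rabs (Gfun (f nu a) (theta nu a) qs X - nu * L nu a * tanh (qs * X)))
      + Rabs (L nu a) <= M)
  /\
  (exists M : R, forall nu a, I1 nu -> I2 a -> forall X,
      / nu ^ 2 * exp (2 * qs * Rabs X) * Rabs (Hfun (f nu a) (theta nu a) qs nu X) <= M).
Proof.
  split.
  - assert (Hex : forall nu a, exists g, I1 nu -> I2 a ->
      Rabs g <= theta nu a * C /\
      forall X, Rabs (Gfun (f nu a) (theta nu a) qs X - g * tanh (qs * X))
                <= 2 * (theta nu a * C) * (1 - tanh (qs * Rabs X))).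
    { intros nu a. destruct (classic (I1 nu /\ I2 a)) as [[h1 h2]|h].
      - destruct (partI (f nu a) (theta nu a) C qs) as [g Hg]; auto.
        exists g; auto.
      - exists 0. intros h1 h2; exfalso; auto. }
    exists (fun nu a => proj1_sig (constructive_indefinite_description _ (Hex nu a)) / nu).
    exists (3 * C ^ 2).
    intros nu a h1 h2 X.
    destruct (constructive_indefinite_description _ (Hex nu a)) as [g Hg]. simpl.
    destruct (Hg h1 h2) as [Hg1 Hg2].
    pose proof (hI1 nu h1) as [hn0 hn1].
    pose proof (htheta nu a h1 h2) as ht. pose proof (htheta0 nu a h1 h2) as ht0.
    set (th := theta nu a) in *.
    replace (nu * (g / nu)) with g by (field; lra).
    assert (W : th / nu <= C).
    { apply Rle_div_l. lra. nra. }
    assert (W0 : 0 <= th / nu) by (apply Rle_mult_inv_pos; lra).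
    assert (Ex : exp (qs * Rabs X) * (1 - tanh (qs * Rabs X)) <= 1).
    { apply exp_tanh_le. pose proof (Rabs_pos X). nra. }
    assert (Ep : 0 < exp (qs * Rabs X)) by apply exp_pos.
    assert (A : exp (qs * Rabs X) * Rabs (Gfun (f nu a) th qs X - g * tanh (qs * X)) <= 2 * (th * C)).
    { specialize (Hg2 X).
      apply Rle_trans with (exp (qs * Rabs X) * (2 * (th * C) * (1 - tanh (qs * Rabs X)))).
      apply Rmult_le_compat_l; lra.
      replace (exp (qs * Rabs X) * (2 * (th * C) * (1 - tanh (qs * Rabs X))))
        with (2 * (th * C) * (exp (qs * Rabs X) * (1 - tanh (qs * Rabs X)))) by ring.
      assert (0 <= th * C) by nra. nra. }
    assert (B : / nu * (exp (qs * Rabs X) * Rabs (Gfun (f nu a) th qs X - g * tanh (qs * X))) <= 2 * C * (th / nu)).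
    { apply Rle_trans with (/ nu * (2 * (th * C))).
      apply Rmult_le_compat_l. left; apply Rinv_0_lt_compat; lra. exact A.
      right. unfold Rdiv. ring. }
    assert (D : Rabs (g / nu) <= C * (th / nu)).
    { unfold Rdiv. rewrite Rabs_mult, Rabs_inv, (Rabs_pos_eq nu) by lra.
      replace (C * (th * / nu)) with ((th * C) * / nu) by ring.
      apply Rmult_le_compat_r. left; apply Rinv_0_lt_compat; lra. exact Hg1. }
    nra.
  - exists (4 * C ^ 2 * qs * exp (2 * qs)).
    intros nu a h1 h2 X.
    pose proof (hI1 nu h1) as [hn0 hn1].
    pose proof (htheta nu a h1 h2) as ht. pose proof (htheta0 nu a h1 h2) as ht0.
    set (th := theta nu a) in *.
    set (Dl := tanh (qs * X + qs * nu) - tanh (qs * X)).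
    assert (HD : Rabs Dl <= 4 * (qs * nu) * exp (2 * (qs * nu)) * exp (- (2 * Rabs (qs * X)))).
    { apply tanh_diff_bound. nra. }
    rewrite Rabs_mult, (Rabs_pos_eq qs) in HD by lra.
    set (e' := exp (- (2 * (qs * Rabs X)))) in *.
    assert (He' : 0 < e') by apply exp_pos.
    assert (E2 : exp (2 * (qs * nu)) <= exp (2 * qs)) by (apply exp_le_mono; nra).
    assert (HB : Rabs Dl <= 4 * qs * nu * exp (2 * qs) * e').
    { apply Rle_trans with (1 := HD).
      replace (4 * (qs * nu) * exp (2 * (qs * nu)) * e') with ((4 * qs * nu * e') * exp (2 * (qs * nu))) by ring.
      replace (4 * qs * nu * exp (2 * qs) * e') with ((4 * qs * nu * e') * exp (2 * qs)) by ring.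
      apply Rmult_le_compat_l. assert (0 <= qs * nu) by nra. nra. exact E2. }
    assert (HH : Rabs (Hfun (f nu a) th qs nu X) <= C / nu * (th * Rabs Dl)).
    { unfold Hfun. eapply Rle_trans. apply hlip; auto.
      right. f_equal. replace (X + nu + th * tanh (qs * X + qs * nu) - (X + nu + th * tanh (qs * X))) with (th * Dl) by (unfold Dl; ring). rewrite Rabs_mult, (Rabs_pos_eq th) by lra. reflexivity. }
    set (K := 4 * C ^ 2 * qs * exp (2 * qs)).
    assert (HK : Rabs (Hfun (f nu a) th qs nu X) <= K * nu ^ 2 * e').
    { eapply Rle_trans. exact HH.
      apply Rle_trans with (C / nu * ((C * nu ^ 2) * (4 * qs * nu * exp (2 * qs) * e'))).
      apply Rmult_le_compat_l. apply Rle_mult_inv_pos; lra.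
      apply Rmult_le_compat; auto. apply Rabs_pos.
      right. unfold K. field. lra. }
    assert (EE : exp (2 * qs * Rabs X) * e' = 1).
    { unfold e'. rewrite <- exp_plus. replace (2 * qs * Rabs X + - (2 * (qs * Rabs X))) with 0 by ring. apply exp_0. }
    assert (P1 : 0 < / nu ^ 2 * exp (2 * qs * Rabs X)).
    { apply Rmult_lt_0_compat. apply Rinv_0_lt_compat. nra. apply exp_pos. }
    apply Rle_trans with (/ nu ^ 2 * exp (2 * qs * Rabs X) * (K * nu ^ 2 * e')).
    apply Rmult_le_compat_l; lra.
    right. replace (/ nu ^ 2 * exp (2 * qs * Rabs X) * (K * nu ^ 2 * e'))
      with (K * (exp (2 * qs * Rabs X) * e') * (nu ^ 2 * / nu ^ 2)) by ring.
    rewrite EE, Rinv_r. ring. nra.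
Qed.
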